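(* Let $K\ge1$ and let $\omega\in\mathbb{T}$ be irrational with $\beta(\omega)>40K$. Then for every $\theta\in\mathbb{T}$, $H_{K,\theta,\omega}$ has no eigenvalues in $[0,4e^{K\|f\|_\infty}]$.
   Context: $\mathbb{T}=\mathbb{R}/\mathbb{Z}$. $f:\mathbb{T}\to\mathbb{R}$ is a non-constant real-analytic function with zero mean and $\|f\|_{C^1}=1$. $V(\theta)=\exp(Kf(\theta+\omega))+\exp(-Kf(\theta))$, and $(H_{K,\theta,\omega}u)_n=-u_{n+1}-u_{n-1}+V(\theta+n\omega)u_n$ on $\ell^2(\mathbb{Z})$. For irrational $\omega$ with continued fraction approximants $p_n/q_n$, $\beta(\omega)=\limsup_n\frac{\log q_{n+1}}{q_n}$. *)

(* Defs.v *)
From Stdlib Require Import Reals ZArith Lra.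
Open Scope R_scope.

(* f : R -> R is 1-periodic, i.e. a function on T = R/Z *)
Definition periodic1 (f : R -> R) : Prop := forall x, f (x + 1) = f x.

Definition real_analytic (f : R -> R) : Prop :=
  forall x0 : R, exists r : R, 0 < r /\ exists a : nat -> R,
    forall x, Rabs (x - x0) < r -> Pser a (x - x0) (f x).

Definition is_sup_norm (g : R -> R) (s : R) : Prop :=
  is_lub (fun y => exists x, y = Rabs (g x)) s.

Definition irrational (w : R) : Prop :=
  forall (p q : Z), q <> 0%Z -> w <> IZR p / IZR q.

(* Continued fraction expansion of (the class mod 1 of) w:
   x_0 = {w}, x_{n+1} = {1/x_n}, a_{n+1} = floor (1/x_n). *)
Fixpoint cf_rem (w : R) (n : nat) : R :=
  match n with
  | O => frac_part w
  | S m => frac_part (/ cf_rem w m)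
  end.

(* partial quotient a_{n+1} *)
Definition cf_a (w : R) (n : nat) : R := IZR (Int_part (/ cf_rem w n)).

(* (q_n, q_{n+1}) with q_0 = 1, q_1 = a_1, q_{n+2} = a_{n+2} q_{n+1} + q_n *)
Fixpoint cf_qpair (w : R) (n : nat) : R * R :=
  match n with
  | O => (1, cf_a w 0)
  | S m => let (p, c) := cf_qpair w m in (c, cf_a w (S m) * c + p)
  end.

Definition cf_q (w : R) (n : nat) : R := fst (cf_qpair w n).

(* limsup_n u_n > c  (limsup in the extended reals) *)
Definition limsup_gt (u : nat -> R) (c : R) : Prop :=
  exists c', c < c' /\ forall N : nat, exists n : nat, (N <= n)%nat /\ c' < u n.

Definition beta_gt (w : R) (c : R) : Prop :=
  limsup_gt (fun n => ln (cf_q w (S n)) / cf_q w n) c.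

Definition Vpot (f : R -> R) (K w th : R) : R :=
  exp (K * f (th + w)) + exp (- K * f th).

Definition l2Z (u : Z -> R) : Prop :=
  exists M : R, forall N : nat,
    sum_f_R0 (fun k => u (Z.of_nat k) ^ 2 + u (- Z.of_nat (S k))%Z ^ 2) N <= M.

Definition is_eigenvalue (f : R -> R) (K th w E : R) : Prop :=
  exists u : Z -> R, l2Z u /\ (exists n, u n <> 0) /\
    forall n : Z,
      - u (n + 1)%Z - u (n - 1)%Z + Vpot f K w (th + IZR n * w) * u n = E * u n.

(* Main.v *)
Require Import Defs.
From Stdlib Require Import Reals Lra Lia ZArith.
Open Scope R_scope.

Record M2 := mkM { ma : R; mb : R; mc : R; md : R }.
Definition mmul (X Y : M2) : M2 :=
  mkM (ma X * ma Y + mb X * mc Y) (ma X * mb Y + mb X * md Y)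
      (mc X * ma Y + md X * mc Y) (mc X * mb Y + md X * md Y).
Definition msub (X Y : M2) : M2 := mkM (ma X - ma Y) (mb X - mb Y) (mc X - mc Y) (md X - md Y).
Definition madj (X : M2) : M2 := mkM (md X) (- mb X) (- mc X) (ma X).
Definition mdet (X : M2) : R := ma X * md X - mb X * mc X.
Definition mv (X : M2) (v : R * R) : R * R :=
  (ma X * fst v + mb X * snd v, mc X * fst v + md X * snd v).
Definition nm (X : M2) : R := Rabs (ma X) + Rabs (mb X) + Rabs (mc X) + Rabs (md X).
Definition nv (v : R * R) : R := Rmax (Rabs (fst v)) (Rabs (snd v)).
Definition vsub (v u : R * R) : R * R := (fst v - fst u, snd v - snd u).
Definition mid : M2 := mkM 1 0 0 1.

Lemma nv_le v c : Rabs (fst v) <= c -> Rabs (snd v) <= c -> nv v <= c.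
Proof. intros; unfold nv; apply Rmax_lub; auto. Qed.
Lemma nv_fst v : Rabs (fst v) <= nv v. Proof. apply Rmax_l. Qed.
Lemma nv_snd v : Rabs (snd v) <= nv v. Proof. apply Rmax_r. Qed.
Lemma nv_ge0 v : 0 <= nv v. Proof. pose proof (nv_fst v); pose proof (Rabs_pos (fst v)); lra. Qed.
Lemma nm_ge0 X : 0 <= nm X.
Proof. unfold nm; pose proof (Rabs_pos (ma X)); pose proof (Rabs_pos (mb X));
  pose proof (Rabs_pos (mc X)); pose proof (Rabs_pos (md X)); lra. Qed.

Lemma lin_bound a b x y m : Rabs x <= m -> Rabs y <= m -> Rabs (a * x + b * y) <= (Rabs a + Rabs b) * m.
Proof.
  intros Hx Hy. eapply Rle_trans. apply Rabs_triang. rewrite !Rabs_mult.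
  pose proof (Rabs_pos a); pose proof (Rabs_pos b).
  assert (Rabs a * Rabs x <= Rabs a * m) by (apply Rmult_le_compat_l; auto).
  assert (Rabs b * Rabs y <= Rabs b * m) by (apply Rmult_le_compat_l; auto). lra.
Qed.

Lemma nv_mv X v : nv (mv X v) <= nm X * nv v.
Proof.
  pose proof (nv_fst v); pose proof (nv_snd v); pose proof (nv_ge0 v).
  pose proof (Rabs_pos (ma X)); pose proof (Rabs_pos (mb X));
  pose proof (Rabs_pos (mc X)); pose proof (Rabs_pos (md X)).
  apply nv_le; simpl.
  - eapply Rle_trans. apply lin_bound; eauto. unfold nm. nra.
  - eapply Rle_trans. apply lin_bound; eauto. unfold nm. nra.
Qed.

Lemma prod_bound a b c d : Rabs (a * b + c * d) <= Rabs a * Rabs b + Rabs c * Rabs d.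
Proof. eapply Rle_trans. apply Rabs_triang. rewrite !Rabs_mult; lra. Qed.

Lemma nm_mul X Y : nm (mmul X Y) <= nm X * nm Y.
Proof.
  unfold nm, mmul; simpl.
  pose proof (prod_bound (ma X) (ma Y) (mb X) (mc Y)).
  pose proof (prod_bound (ma X) (mb Y) (mb X) (md Y)).
  pose proof (prod_bound (mc X) (ma Y) (md X) (mc Y)).
  pose proof (prod_bound (mc X) (mb Y) (md X) (md Y)).
  pose proof (Rabs_pos (ma X)); pose proof (Rabs_pos (mb X));
  pose proof (Rabs_pos (mc X)); pose proof (Rabs_pos (md X)).
  pose proof (Rabs_pos (ma Y)); pose proof (Rabs_pos (mb Y));
  pose proof (Rabs_pos (mc Y)); pose proof (Rabs_pos (md Y)).
  nra.
Qed.

Lemma nm_triang_sub X Y Z : nm (msub X Z) <= nm (msub X Y) + nm (msub Y Z).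
Proof.
  unfold nm, msub; simpl.
  pose proof (Rabs_triang (ma X - ma Y) (ma Y - ma Z)).
  pose proof (Rabs_triang (mb X - mb Y) (mb Y - mb Z)).
  pose proof (Rabs_triang (mc X - mc Y) (mc Y - mc Z)).
  pose proof (Rabs_triang (md X - md Y) (md Y - md Z)).
  replace (ma X - ma Z) with ((ma X - ma Y) + (ma Y - ma Z)) by ring.
  replace (mb X - mb Z) with ((mb X - mb Y) + (mb Y - mb Z)) by ring.
  replace (mc X - mc Z) with ((mc X - mc Y) + (mc Y - mc Z)) by ring.
  replace (md X - md Z) with ((md X - md Y) + (md Y - md Z)) by ring.
  lra.
Qed.

Lemma mul_sub_l X Y Z : msub (mmul X Y) (mmul X Z) = mmul X (msub Y Z).
Proof. unfold msub, mmul; simpl; f_equal; ring. Qed.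
Lemma mul_sub_r X Y Z : msub (mmul X Z) (mmul Y Z) = mmul (msub X Y) Z.
Proof. unfold msub, mmul; simpl; f_equal; ring. Qed.

Lemma nm_mul_diff X Y X' Y' :
  nm (msub (mmul X Y) (mmul X' Y')) <= nm X * nm (msub Y Y') + nm (msub X X') * nm Y'.
Proof.
  eapply Rle_trans. apply (nm_triang_sub _ (mmul X Y')).
  rewrite mul_sub_l, mul_sub_r. pose proof (nm_mul X (msub Y Y')). pose proof (nm_mul (msub X X') Y'). lra.
Qed.

Lemma mv_mul X Y v : mv (mmul X Y) v = mv X (mv Y v).
Proof. destruct v; unfold mv, mmul; simpl; f_equal; ring. Qed.
Lemma mv_sub X Y v : vsub (mv X v) (mv Y v) = mv (msub X Y) v.
Proof. destruct v; unfold mv, msub, vsub; simpl; f_equal; ring. Qed.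
Lemma mdet_mul X Y : mdet (mmul X Y) = mdet X * mdet Y.
Proof. unfold mdet, mmul; simpl; ring. Qed.
Lemma adj_mv X v : mdet X = 1 -> mv (madj X) (mv X v) = v.
Proof. destruct v as [x y]; destruct X as [a b c d]; unfold mdet, mv, madj; simpl; intros H; f_equal.
  - transitivity ((a * d - b * c) * x); [ring| rewrite H; ring].
  - transitivity ((a * d - b * c) * y); [ring| rewrite H; ring]. Qed.
Lemma madj_sub X Y : msub (madj X) (madj Y) = madj (msub X Y).
Proof. unfold msub, madj; simpl; f_equal; ring. Qed.
Lemma nm_adj X : nm (madj X) = nm X.
Proof. unfold nm, madj; simpl; rewrite !Rabs_Ropp; ring. Qed.
Lemma mv_id v : mv mid v = v.
Proof. destruct v; unfold mv, mid; simpl; f_equal; ring. Qed.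

Lemma nv_vsub_lower v u : nv v - nv (vsub v u) <= nv u.
Proof.
  unfold nv, vsub; simpl.
  pose proof (Rabs_triang_inv (fst v) (fst u)).
  pose proof (Rabs_triang_inv (snd v) (snd u)).
  pose proof (Rmax_l (Rabs (fst u)) (Rabs (snd u))).
  pose proof (Rmax_r (Rabs (fst u)) (Rabs (snd u))).
  pose proof (Rmax_l (Rabs (fst v - fst u)) (Rabs (snd v - snd u))).
  pose proof (Rmax_r (Rabs (fst v - fst u)) (Rabs (snd v - snd u))).
  unfold Rmax at 1. destruct (Rle_dec (Rabs (fst v)) (Rabs (snd v))); lra.
Qed.

Lemma gordon T v : mdet T = 1 ->
  nv v <= 2 * Rmax (nv (mv (madj T) v)) (Rmax (nv (mv T v)) (nv (mv T (mv T v)))).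
Proof.
  intros Hd. destruct v as [x y]. unfold mdet in Hd.
  set (M := Rmax _ _).
  assert (H1 : nv (mv (madj T) (x, y)) <= M) by apply Rmax_l.
  assert (H2 : nv (mv T (x, y)) <= M) by (eapply Rle_trans; [apply Rmax_l|apply Rmax_r]).
  assert (H3 : nv (mv T (mv T (x, y))) <= M) by (eapply Rle_trans; [apply Rmax_r|apply Rmax_r]).
  destruct T as [a b c d]; simpl in *.
  set (t := a + d).
  unfold mv, madj in *; simpl in *.
  pose proof (nv_fst (a * x + b * y, c * x + d * y)) as A1; pose proof (nv_snd (a * x + b * y, c * x + d * y)) as A2.
  pose proof (nv_fst (d * x + - b * y, - c * x + a * y)) as B1; pose proof (nv_snd (d * x + - b * y, - c * x + a * y)) as B2.
  set (w := (a * x + b * y, c * x + d * y)) in *.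
  pose proof (nv_fst (a * fst w + b * snd w, c * fst w + d * snd w)) as C1.
  pose proof (nv_snd (a * fst w + b * snd w, c * fst w + d * snd w)) as C2.
  simpl in *. subst w; simpl in *.
  destruct (Rle_dec (Rabs t) 1) as [Ht|Ht].
  - (* v = t Tv - TTv *)
    apply nv_le; simpl.
    + replace x with (t * (a * x + b * y) + - (a * (a * x + b * y) + b * (c * x + d * y)))
        by (unfold t; transitivity ((a*d-b*c)*x); [ring | rewrite Hd; ring]).
      eapply Rle_trans. apply Rabs_triang. rewrite Rabs_Ropp, Rabs_mult.
      assert (Rabs t * Rabs (a * x + b * y) <= 1 * M).
      { apply Rmult_le_compat; auto using Rabs_pos; lra. }
      lra.
    + replace y with (t * (c * x + d * y) + - (c * (a * x + b * y) + d * (c * x + d * y)))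
        by (unfold t; transitivity ((a*d-b*c)*y); [ring | rewrite Hd; ring]).
      eapply Rle_trans. apply Rabs_triang. rewrite Rabs_Ropp, Rabs_mult.
      assert (Rabs t * Rabs (c * x + d * y) <= 1 * M).
      { apply Rmult_le_compat; auto using Rabs_pos; lra. }
      lra.
  - (* t v = adj v + T v *)
    apply nv_le; simpl.
    + assert (E : t * x = (d * x + - b * y) + (a * x + b * y)) by (unfold t; ring).
      assert (Rabs (t * x) <= 2 * M) by (rewrite E; eapply Rle_trans; [apply Rabs_triang|lra]).
      rewrite Rabs_mult in H. assert (Rabs x <= Rabs t * Rabs x) by (pose proof (Rabs_pos x); nra). lra.
    + assert (E : t * y = (- c * x + a * y) + (c * x + d * y)) by (unfold t; ring).
      assert (Rabs (t * y) <= 2 * M) by (rewrite E; eapply Rle_trans; [apply Rabs_triang|lra]).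
      rewrite Rabs_mult in H. assert (Rabs y <= Rabs t * Rabs y) by (pose proof (Rabs_pos y); nra). lra.
Qed.

Lemma nm_msub_sym X Y : nm (msub X Y) = nm (msub Y X).
Proof. unfold nm, msub; simpl. rewrite (Rabs_minus_sym (ma X)), (Rabs_minus_sym (mb X)),
  (Rabs_minus_sym (mc X)), (Rabs_minus_sym (md X)). reflexivity. Qed.

Lemma nv_vsub_sym a b : nv (vsub a b) = nv (vsub b a).
Proof. unfold nv, vsub; simpl. rewrite (Rabs_minus_sym (fst a)), (Rabs_minus_sym (snd a)). reflexivity. Qed.

Fixpoint Pm (A : Z -> M2) (s : Z) (n : nat) : M2 :=
  match n with O => mid | S k => mmul (A (s + Z.of_nat (S k))%Z) (Pm A s k) end.

Lemma Pm_det A s n : (forall j, mdet (A j) = 1) -> mdet (Pm A s n) = 1.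
Proof. intros H; induction n; simpl. unfold mdet, mid; simpl; ring.
  rewrite mdet_mul, H, IHn; ring. Qed.

Lemma nm_mid : nm mid = 2.
Proof. unfold nm, mid; simpl. rewrite Rabs_R1, Rabs_R0. ring. Qed.

Lemma Pm_bound A s n B : 1 <= B -> (forall j, nm (A j) <= B) -> nm (Pm A s n) <= 2 * B ^ n.
Proof.
  intros HB H; induction n; simpl. rewrite nm_mid; lra.
  eapply Rle_trans. apply nm_mul. pose proof (nm_ge0 (A (s + Z.pos (Pos.of_succ_nat n))%Z)).
  pose proof (nm_ge0 (Pm A s n)).
  specialize (H (s + Z.pos (Pos.of_succ_nat n))%Z).
  apply Rle_trans with (B * (2 * B ^ n)). apply Rmult_le_compat; auto. lra.
Qed.

Lemma Pm_diff A s s' n B d : 1 <= B -> 0 <= d -> (forall j, nm (A j) <= B) ->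
  (forall k : nat, nm (msub (A (s + Z.of_nat k)%Z) (A (s' + Z.of_nat k)%Z)) <= d) ->
  nm (msub (Pm A s n) (Pm A s' n)) <= 2 * INR n * B ^ n * d.
Proof.
  intros HB Hd H Hk; induction n.
  - simpl. unfold nm, msub; simpl. replace (1-1) with 0 by ring. replace (0-0) with 0 by ring.
    rewrite Rabs_R0. lra.
  - change (Pm A s (S n)) with (mmul (A (s + Z.of_nat (S n))%Z) (Pm A s n)).
    change (Pm A s' (S n)) with (mmul (A (s' + Z.of_nat (S n))%Z) (Pm A s' n)).
    eapply Rle_trans. apply nm_mul_diff.
    pose proof (H (s + Z.of_nat (S n))%Z). pose proof (Hk (S n)).
    pose proof (Pm_bound A s' n B HB H).
    pose proof (nm_ge0 (A (s + Z.of_nat (S n))%Z)).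
    pose proof (nm_ge0 (msub (Pm A s n) (Pm A s' n))).
    pose proof (nm_ge0 (msub (A (s + Z.of_nat (S n))%Z) (A (s' + Z.of_nat (S n))%Z))).
    pose proof (nm_ge0 (Pm A s' n)).
    assert (HBn : 1 <= B ^ n) by (apply pow_R1_Rle; lra).
    rewrite S_INR. simpl pow.
    apply Rle_trans with (B * (2 * INR n * B ^ n * d) + d * (2 * B ^ n)).
    apply Rplus_le_compat. apply Rmult_le_compat; auto.
    apply Rmult_le_compat; auto.
    pose proof (pos_INR n).
    assert (0 <= INR n * B ^ n * d) by (apply Rmult_le_pos; [apply Rmult_le_pos|]; lra).
    assert (0 <= (B - 1) * (B ^ n * d)) by (apply Rmult_le_pos; [lra| apply Rmult_le_pos; lra]).
    replace (2 * (INR n + 1) * (B * B ^ n) * d) with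
      (B * (2 * INR n * B ^ n * d) + d * (2 * B ^ n) + 2 * ((B - 1) * (B ^ n * d))) by ring.
    lra.
Qed.

Lemma Pm_sol (V : Z -> R) (E : R) (u : Z -> R) :
  (forall j, u (j + 1)%Z = (V j - E) * u j - u (j - 1)%Z) ->
  forall s n, mv (Pm (fun j => mkM (V j - E) (-1) 1 0) s n) (u (s + 1)%Z, u s)
     = (u (s + Z.of_nat n + 1)%Z, u (s + Z.of_nat n)%Z).
Proof.
  intros H s n. induction n.
  - simpl. rewrite mv_id. f_equal; f_equal; lia.
  - change (Pm _ s (S n)) with (mmul (mkM (V (s + Z.of_nat (S n))%Z - E) (-1) 1 0)
       (Pm (fun j => mkM (V j - E) (-1) 1 0) s n)).
    rewrite mv_mul, IHn. unfold mv; simpl.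
    replace (Z.pos (Pos.of_succ_nat n)) with (Z.of_nat n + 1)%Z by lia.
    replace (s + (Z.of_nat n + 1) + 1)%Z with (s + Z.of_nat n + 1 + 1)%Z by lia.
    replace (s + (Z.of_nat n + 1))%Z with (s + Z.of_nat n + 1)%Z by lia.
    rewrite (H (s + Z.of_nat n + 1)%Z). replace (s + Z.of_nat n + 1 - 1)%Z with (s + Z.of_nat n)%Z by lia.
    f_equal; ring.
Qed.

Lemma cf_q0 w : cf_q w 0 = 1. Proof. reflexivity. Qed.
Lemma cf_qpair_eq w n : cf_qpair w n = (cf_q w n, cf_q w (S n)).
Proof.
  induction n as [|n IH]; [reflexivity|].
  unfold cf_q at 1 2. simpl. rewrite IH. simpl. unfold cf_q; simpl. rewrite IH. reflexivity.
Qed.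
Lemma cf_q1 w : cf_q w 1 = cf_a w 0. Proof. reflexivity. Qed.
Lemma cf_qSS w n : cf_q w (S (S n)) = cf_a w (S n) * cf_q w (S n) + cf_q w n.
Proof. unfold cf_q at 1. simpl. rewrite cf_qpair_eq. reflexivity. Qed.

Lemma cf_a_rem w n : cf_a w n + cf_rem w (S n) = / cf_rem w n.
Proof. unfold cf_a; simpl. rewrite <- Rplus_Int_part_frac_part. reflexivity. Qed.

Lemma rem_range w n : 0 <= cf_rem w n < 1.
Proof. destruct n; simpl; [destruct (base_fp w)|destruct (base_fp (/ cf_rem w n))]; lra. Qed.

Fixpoint Dp (w : R) (n : nat) : R :=
  match n with O => cf_rem w 0 | S m => Dp w m * cf_rem w (S m) end.

Lemma a_ge1 w n : 0 < cf_rem w n -> 1 <= cf_a w n.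
Proof.
  intro H. pose proof (rem_range w n).
  assert (1 < / cf_rem w n).
  { apply (Rmult_lt_reg_l (cf_rem w n)); auto. rewrite Rinv_r; lra. }
  unfold cf_a. destruct (base_Int_part (/ cf_rem w n)).
  assert (0 < IZR (Int_part (/ cf_rem w n))) by lra.
  apply lt_IZR in H4. apply IZR_le. lia.
Qed.

Record CFInv (w : R) (n : nat) : Prop := {
  ci_pos : 0 < cf_rem w n;
  ci_z : exists z z', cf_q w n = IZR z /\ cf_q w (S n) = IZR z';
  ci_q1 : 1 <= cf_q w n;
  ci_qn : INR n <= cf_q w n;
  ci_q1' : 1 <= cf_q w (S n);
  ci_qn' : INR (S n) <= cf_q w (S n);
  ci_P : exists P P' s, (s = 1 \/ s = -1) /\
      cf_q w n * w - IZR P = s * Dp w n /\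
      cf_q w (S n) * w - IZR P' = - s * Dp w (S n);
  ci_det : cf_q w (S n) * Dp w n + cf_q w n * Dp w (S n) = 1
}.

Lemma Dp_pos w n : (forall k, (k <= n)%nat -> 0 < cf_rem w k) -> 0 < Dp w n.
Proof.
  induction n; intros H. apply (H 0%nat); lia. change (Dp w (S n)) with (Dp w n * cf_rem w (S n)).
  apply Rmult_lt_0_compat. apply IHn; intros; apply H; lia. apply H; lia.
Qed.

Lemma rem0_pos w : irrational w -> 0 < cf_rem w 0.
Proof.
  intros Hw. pose proof (rem_range w 0). destruct H as [[H|H] _]; auto.
  exfalso. simpl in H. pose proof (Rplus_Int_part_frac_part w).
  apply (Hw (Int_part w) 1%Z); [lia|]. rewrite <- H in H0. unfold Rdiv. simpl. lra.
Qed.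

Lemma cf_inv_all w : irrational w -> forall n, CFInv w n /\ (forall k, (k <= n)%nat -> 0 < cf_rem w k).
Proof.
  intros Hw.
  assert (Hnext : forall n, CFInv w n -> (forall k, (k <= n)%nat -> 0 < cf_rem w k) -> 0 < cf_rem w (S n)).
  { intros n [Hp [z [z' [Hz Hz']]] _ _ Hq1' _ [P [P' [s [Hs [H1 H2]]]]] _] Hall.
    pose proof (rem_range w (S n)). destruct H as [[H|H] _]; auto. exfalso.
    assert (Dp w (S n) = 0) by (change (Dp w (S n)) with (Dp w n * cf_rem w (S n)); rewrite <- H; ring).
    rewrite H0 in H2. apply (Hw P' z'). intro; subst. simpl in Hq1'. lra.
    rewrite <- Hz'. field_simplify_eq. lra. lra. }
  induction n.
  - assert (H0 : 0 < cf_rem w 0) by (apply rem0_pos; auto).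
    assert (Hall : forall k, (k <= 0)%nat -> 0 < cf_rem w k) by (intros k Hk; replace k with 0%nat by lia; auto).
    assert (Ha := a_ge1 w 0 H0).
    assert (Hid := cf_a_rem w 0).
    assert (Hi : CFInv w 0).
    { constructor.
      + exact H0.
      + exists 1%Z, (Int_part (/ cf_rem w 0)). split; reflexivity.
      + rewrite cf_q0; lra.
      + rewrite cf_q0; simpl; lra.
      + rewrite cf_q1. exact Ha.
      + rewrite cf_q1; simpl; lra.
      + exists (Int_part w), (Int_part (/ cf_rem w 0) * Int_part w + 1)%Z, 1.
        split; [left; reflexivity|]. rewrite cf_q0, cf_q1.
        change (Dp w 1) with (cf_rem w 0 * cf_rem w 1). change (Dp w 0) with (cf_rem w 0).
        assert (Hr0 : cf_rem w 0 = w - IZR (Int_part w)).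
        { change (cf_rem w 0) with (frac_part w). pose proof (Rplus_Int_part_frac_part w). lra. }
        rewrite plus_IZR, mult_IZR. fold (cf_a w 0).
        assert (Hr1 : cf_rem w 1 = / cf_rem w 0 - cf_a w 0) by lra.
        split. lra.
        rewrite Hr1. field_simplify_eq. 2: lra. rewrite Hr0. ring.
      + rewrite cf_q0, cf_q1. simpl.
        assert (cf_rem w 1 = / cf_rem w 0 - cf_a w 0) by lra.
        simpl in H. rewrite H. field. simpl in H0; lra. }
    split; auto.
  - destruct IHn as [Hi Hall].
    assert (Hp1 := Hnext n Hi Hall).
    assert (Hall' : forall k, (k <= S n)%nat -> 0 < cf_rem w k).
    { intros k Hk. destruct (Nat.eq_dec k (S n)). subst; auto. apply Hall; lia. }
    split; auto.
    destruct Hi as [Hp [z [z' [Hz Hz']]] Hq1 Hqn Hq1' Hqn' [P [P' [s [Hs [H1 H2]]]]] Hdet].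
    assert (Ha := a_ge1 w (S n) Hp1).
    assert (Hid := cf_a_rem w (S n)).
    assert (Hr2 : cf_rem w (S (S n)) = / cf_rem w (S n) - cf_a w (S n)) by lra.
    assert (HD : Dp w (S (S n)) = Dp w (S n) * cf_rem w (S (S n))) by reflexivity.
    assert (HD1 : Dp w (S n) = Dp w n * cf_rem w (S n)) by reflexivity.
    assert (Hkey : Dp w n = cf_a w (S n) * Dp w (S n) + Dp w (S (S n))).
    { rewrite HD, Hr2, HD1. field. lra. }
    constructor; auto.
    + exists z', (Int_part (/ cf_rem w (S n)) * z' + z)%Z. split; auto.
      rewrite cf_qSS, plus_IZR, mult_IZR, Hz, Hz'. reflexivity.
    + rewrite cf_qSS. assert (0 <= (cf_a w (S n) - 1) * cf_q w (S n)) by (apply Rmult_le_pos; lra). lra.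
    + rewrite cf_qSS. rewrite (S_INR (S n)). assert (0 <= (cf_a w (S n) - 1) * cf_q w (S n)) by (apply Rmult_le_pos; lra). lra.
    + exists P', (Int_part (/ cf_rem w (S n)) * P' + P)%Z, (- s). split. lra.
      split. lra. rewrite cf_qSS, plus_IZR, mult_IZR. fold (cf_a w (S n)).
      rewrite Hkey in H1. nra.
    + rewrite cf_qSS. rewrite Hkey in Hdet. nra.
Qed.

Lemma cf_approx w n : irrational w ->
  exists (q : nat) (P : Z), INR q = cf_q w n /\ (1 <= q)%nat /\ (n <= q)%nat /\
    Rabs (INR q * w - IZR P) <= / cf_q w (S n).
Proof.
  intros Hw. destruct (cf_inv_all w Hw n) as [Hi Hall].
  destruct Hi as [Hp [z [z' [Hz Hz']]] Hq1 Hqn Hq1' Hqn' [P [P' [s [Hs [H1 H2]]]]] Hdet].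
  assert (HD := Dp_pos w n Hall).
  assert (HD' : 0 < Dp w (S n)).
  { apply Dp_pos. intros k Hk. destruct (Nat.eq_dec k (S n)). subst.
    pose proof (rem_range w (S n)). destruct H as [[H|H] _]; auto. exfalso.
    assert (Dp w (S n) = 0) by (change (Dp w (S n)) with (Dp w n * cf_rem w (S n)); rewrite <- H; ring).
    rewrite H0 in H2. apply (Hw P' z'). intro; subst. lra.
    rewrite <- Hz'. field_simplify_eq. lra. lra. apply Hall; lia. }
  assert (Hz0 : (0 <= z)%Z) by (apply le_IZR; lra).
  exists (Z.to_nat z), P.
  assert (HI : INR (Z.to_nat z) = cf_q w n) by (rewrite INR_IZR_INZ, Z2Nat.id; auto).
  split; auto. split. apply INR_le. simpl. lra. split. apply INR_le. lra.
  rewrite HI, H1, Rabs_mult.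
  replace (Rabs s) with 1 by (unfold Rabs; destruct (Rcase_abs s); lra).
  rewrite Rmult_1_l, Rabs_pos_eq by lra.
  apply (Rmult_le_reg_l (cf_q w (S n))). lra. rewrite Rinv_r by lra.
  assert (0 <= cf_q w n * Dp w (S n)) by (apply Rmult_le_pos; lra). nra.
Qed.

Lemma cf_q_ge1 w n : irrational w -> 1 <= cf_q w n.
Proof. intros Hw. destruct (cf_inv_all w Hw n) as [Hi _]. apply (ci_q1 _ _ Hi). Qed.

Lemma exp_mono x y : x <= y -> exp x <= exp y.
Proof. intros [H|H]. left; apply exp_increasing; auto. subst; lra. Qed.

Lemma f_periodZ f : periodic1 f -> forall z x, f (x + IZR z) = f x.
Proof.
  intros Hp.
  assert (Hn : forall n x, f (x + INR n) = f x).
  { induction n; intros x. simpl. rewrite Rplus_0_r; auto.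
    rewrite S_INR. replace (x + (INR n + 1)) with ((x + INR n) + 1) by ring. rewrite Hp. auto. }
  intros z x. destruct (Z_le_gt_dec 0 z).
  - rewrite <- (Z2Nat.id z) by auto. rewrite <- INR_IZR_INZ. auto.
  - replace z with (- Z.of_nat (Z.to_nat (- z)))%Z by lia.
    rewrite opp_IZR, <- INR_IZR_INZ.
    rewrite <- (Hn (Z.to_nat (-z)) (x + - INR (Z.to_nat (- z)))). f_equal; ring.
Qed.

Lemma sup_bound g s : is_sup_norm g s -> (forall x, Rabs (g x) <= s) /\ 0 <= s.
Proof.
  intros [Hub _]. split. intros x. apply Hub. exists x; auto.
  pose proof (Hub (Rabs (g 0)) (ex_intro _ 0 eq_refl)). pose proof (Rabs_pos (g 0)). lra.
Qed.

Lemma abs_between x c : Rabs x <= c -> - c <= x <= c.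
Proof. unfold Rabs; destruct (Rcase_abs x); lra. Qed.

Section V.
Variables (f df : R -> R) (K w : R).
Hypothesis Hder : forall x, derivable_pt_lim f x (df x).
Hypothesis Hf : forall x, Rabs (f x) <= 1.
Hypothesis Hdf : forall x, Rabs (df x) <= 1.
Hypothesis HK : 0 <= K.

Lemma expKf_le x : exp (K * f x) <= exp K.
Proof. apply exp_mono. pose proof (Hf x). apply abs_between in H.
  replace K with (K * 1) at 2 by ring. apply Rmult_le_compat_l; lra. Qed.
Lemma expmKf_le x : exp (- K * f x) <= exp K.
Proof. apply exp_mono. pose proof (Hf x). apply abs_between in H.
  replace (- K * f x) with (K * (- f x)) by ring.
  replace K with (K * 1) at 2 by ring. apply Rmult_le_compat_l; lra. Qed.

Lemma Vpot_bound t : 0 <= Vpot f K w t <= 2 * exp K.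
Proof. unfold Vpot. pose proof (expKf_le (t + w)). pose proof (expmKf_le t).
  pose proof (exp_pos (K * f (t + w))). pose proof (exp_pos (- K * f t)). lra. Qed.

Lemma Vpot_der t : derivable_pt_lim (Vpot f K w) t
  (exp (K * f (t + w)) * (K * (df (t + w) * 1)) + exp (- K * f t) * (- K * df t)).
Proof.
  apply derivable_pt_lim_plus.
  - apply (derivable_pt_lim_comp (fun t => K * f (t + w)) exp).
    + apply (derivable_pt_lim_scal (fun t => f (t + w)) K).
      apply (derivable_pt_lim_comp (fun t => t + w) f). 
      * apply (derivable_pt_lim_ext (id + fct_cte w)%F). intros; reflexivity.
        replace 1 with (1 + 0) by ring. apply derivable_pt_lim_plus. apply derivable_pt_lim_id. apply derivable_pt_lim_const.
      * apply Hder.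
    + apply derivable_pt_lim_exp.
  - apply (derivable_pt_lim_comp (fun t => - K * f t) exp).
    + apply (derivable_pt_lim_scal f (- K)). apply Hder.
    + apply derivable_pt_lim_exp.
Qed.

Lemma Vpot_der_bound t : Rabs (exp (K * f (t + w)) * (K * (df (t + w) * 1)) + exp (- K * f t) * (- K * df t))
   <= 2 * K * exp K.
Proof.
  eapply Rle_trans. apply Rabs_triang. rewrite Rmult_1_r, !Rabs_mult, Rabs_Ropp.
  rewrite (Rabs_pos_eq K) by auto. rewrite !Rabs_pos_eq by (left; apply exp_pos).
  pose proof (expKf_le (t + w)). pose proof (expmKf_le t). pose proof (Hdf (t + w)). pose proof (Hdf t).
  pose proof (Rabs_pos (df (t + w))). pose proof (Rabs_pos (df t)).
  pose proof (exp_pos (K * f (t + w))). pose proof (exp_pos (- K * f t)).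
  assert (exp (K * f (t + w)) * (K * Rabs (df (t + w))) <= exp K * (K * 1)).
  { apply Rmult_le_compat; try lra. apply Rmult_le_pos; lra. apply Rmult_le_compat_l; lra. }
  assert (exp (- K * f t) * (K * Rabs (df t)) <= exp K * (K * 1)).
  { apply Rmult_le_compat; try lra. apply Rmult_le_pos; lra. apply Rmult_le_compat_l; lra. }
  rewrite (Rabs_pos_eq (exp (- K * f t))) by (left; apply exp_pos). lra.
Qed.

Lemma Vpot_lip a b : Rabs (Vpot f K w a - Vpot f K w b) <= 2 * K * exp K * Rabs (a - b).
Proof.
  assert (Hgen : forall a b, a < b -> Rabs (Vpot f K w b - Vpot f K w a) <= 2 * K * exp K * Rabs (b - a)).
  { intros x y Hxy. destruct (MVT_cor2 (Vpot f K w) _ x y Hxy (fun c _ => Vpot_der c)) as [c [Hc _]].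
    rewrite Hc, Rabs_mult. apply Rmult_le_compat_r. apply Rabs_pos. apply Vpot_der_bound. }
  destruct (Rtotal_order a b) as [H|[H|H]].
  - rewrite Rabs_minus_sym, (Rabs_minus_sym a b). auto.
  - subst. unfold Rminus. rewrite !Rplus_opp_r, Rabs_R0. lra.
  - auto.
Qed.
End V.

Lemma l2_decay u : l2Z u -> forall eps, 0 < eps ->
  exists N : nat, forall j : Z, (Z.of_nat N <= Z.abs j)%Z -> u j ^ 2 < eps.
Proof.
  intros [M HM] eps Heps.
  set (g := fun k : nat => u (Z.of_nat k) ^ 2 + u (- Z.of_nat (S k))%Z ^ 2).
  assert (Hg : forall k, 0 <= g k) by (intros; unfold g; nra).
  set (S := sum_f_R0 g).
  assert (Hgr : Un_growing S).
  { intros n. unfold S. simpl. pose proof (Hg (Datatypes.S n)). lra. }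
  assert (Hub : has_ub S). { exists M. intros x [n Hn]. rewrite Hn. apply HM. }
  destruct (growing_cv S Hgr Hub) as [l Hl].
  assert (HC := CV_Cauchy S (exist _ l Hl)).
  destruct (HC eps Heps) as [N HN].
  assert (Hgk : forall k, (N < k)%nat -> g k < eps).
  { intros k Hk. destruct k. lia.
    specialize (HN (Datatypes.S k) k ltac:(lia) ltac:(lia)). unfold R_dist in HN.
    unfold S in HN. simpl in HN. rewrite Rabs_pos_eq in HN. replace (sum_f_R0 g k + g (Datatypes.S k) - sum_f_R0 g k) with (g (Datatypes.S k)) in HN by ring. auto.
    pose proof (Hg (Datatypes.S k)). lra. }
  exists (N + 2)%nat. intros j Hj.
  destruct (Z_le_gt_dec 0 j).
  - specialize (Hgk (Z.to_nat j) ltac:(lia)). unfold g in Hgk.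
    rewrite Z2Nat.id in Hgk by auto. pose proof (pow2_ge_0 (u (- Z.of_nat (Datatypes.S (Z.to_nat j)))%Z)). lra.
  - specialize (Hgk (Z.to_nat (- j - 1)) ltac:(lia)). unfold g in Hgk.
    replace (- Z.of_nat (Datatypes.S (Z.to_nat (- j - 1))))%Z with j in Hgk by lia.
    pose proof (pow2_ge_0 (u (Z.of_nat (Z.to_nat (- j - 1))))). lra.
Qed.

Lemma exp_mono' x y : x <= y -> exp x <= exp y.
Proof. intros [H|H]. left; apply exp_increasing; auto. subst; lra. Qed.

Lemma pow_exp a n : exp a ^ n = exp (a * INR n).
Proof. induction n. simpl. rewrite Rmult_0_r, exp_0. auto.
  rewrite S_INR. simpl. rewrite IHn, <- exp_plus. f_equal; ring. Qed.

Lemma big_exp x : 1 <= x -> 32 * x <= exp (31 * x).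
Proof.
  intros Hx. replace (31 * x) with (x + 30 * x) by ring. rewrite exp_plus.
  pose proof (exp_ineq1_le x). pose proof (exp_ineq1_le (30 * x)). nra.
Qed.

Lemma numeric K q D : 1 <= K -> (1 <= q)%nat -> 0 <= D -> D <= exp (- (40 * K * INR q)) ->
  (2 * INR q * (8 * exp K) ^ q * (2 * K * exp K * D)) * (2 * (8 * exp K) ^ q) <= / 4.
Proof.
  intros HK Hq HD HDe. set (Q := INR q).
  assert (HQ : 1 <= Q) by (unfold Q; apply (le_INR 1); auto).
  assert (He1 : 2 < exp 1) by (pose proof (exp_ineq1 1 ltac:(lra)); lra).
  assert (He3 : 8 < exp 3).
  { replace 3 with (1 + (1 + 1)) by ring. rewrite !exp_plus.
    pose proof (exp_pos 1). nra. }
  assert (HB : 8 * exp K <= exp (4 * K)).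
  { apply Rle_trans with (exp 3 * exp K). pose proof (exp_pos K). nra.
    rewrite <- exp_plus. apply exp_mono'. lra. }
  set (Y := (8 * exp K) ^ q).
  assert (HY : 0 <= Y) by (unfold Y; apply pow_le; pose proof (exp_pos K); lra).
  assert (HYX : Y <= exp (4 * K * Q)).
  { unfold Y, Q. rewrite <- pow_exp. apply pow_incr. pose proof (exp_pos K); lra. }
  assert (HeK : exp K <= exp (K * Q)) by (apply exp_mono'; nra).
  set (X := exp (4 * K * Q)) in *.
  assert (Hprod : exp (K * Q) * X * X * exp (- (40 * K * Q)) = exp (- (31 * (K * Q)))).
  { unfold X. rewrite <- !exp_plus. f_equal. ring. }
  assert (Hx := big_exp (K * Q) ltac:(nra)).
  assert (H31 : exp (- (31 * (K * Q))) * exp (31 * (K * Q)) = 1) by (rewrite <- exp_plus; replace (- (31 * (K * Q)) + 31 * (K * Q)) with 0 by ring; apply exp_0).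
  pose proof (exp_pos K). pose proof (exp_pos (K * Q)). pose proof (exp_pos (- (31 * (K * Q)))).
  pose proof (exp_pos (- (40 * K * Q))).
  apply Rle_trans with (8 * K * Q * (exp (K * Q) * X * X * exp (- (40 * K * Q)))).
  - replace ((2 * Q * Y * (2 * K * exp K * D)) * (2 * Y)) with (8 * K * Q * (exp K * Y * Y * D)) by ring.
    apply Rmult_le_compat_l. nra.
    change (INR q) with Q in HDe.
    assert (A1 : exp K * Y <= exp (K * Q) * X) by (apply Rmult_le_compat; lra).
    assert (A2 : exp K * Y * Y <= exp (K * Q) * X * X) by (apply Rmult_le_compat; nra).
    apply Rmult_le_compat; nra.
  - rewrite Hprod. nra.
Qed.

Theorem mainTheorem5 :
  forall (f df : R -> R) (normf normdf : R),
    periodic1 f ->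
    real_analytic f ->
    (exists x y, f x <> f y) ->
    (forall pr : Riemann_integrable f 0 1, RiemannInt pr = 0) ->
    (forall x, derivable_pt_lim f x (df x)) ->
    is_sup_norm f normf ->
    is_sup_norm df normdf ->
    normf + normdf = 1 ->
  forall (K w : R),
    1 <= K ->
    irrational w ->
    beta_gt w (40 * K) ->
  forall (th E : R),
    0 <= E <= 4 * exp (K * normf) ->
    ~ is_eigenvalue f K th w E.
Proof.
  intros f df normf normdf Hper _ _ _ Hder Hsf Hsdf Hsum K w HK Hw Hbeta th E HE.
  intros [u [Hl2 [[m Hm] Heq]]].
  destruct (sup_bound _ _ Hsf) as [Hf0 Hnf]. destruct (sup_bound _ _ Hsdf) as [Hdf0 Hndf].
  assert (Hf : forall x, Rabs (f x) <= 1) by (intros x; pose proof (Hf0 x); lra).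
  assert (Hdf : forall x, Rabs (df x) <= 1) by (intros x; pose proof (Hdf0 x); lra).
  assert (HK0 : 0 <= K) by lra.
  assert (HE' : 0 <= E <= 4 * exp K).
  { split. lra. apply Rle_trans with (4 * exp (K * normf)). lra.
    apply Rmult_le_compat_l. lra. apply exp_mono. nra. }
  set (Vs := fun j : Z => Vpot f K w (th + IZR j * w)).
  assert (Hrec : forall j, u (j + 1)%Z = (Vs j - E) * u j - u (j - 1)%Z).
  { intros j. specialize (Heq j). unfold Vs. lra. }
  set (A := fun j : Z => mkM (Vs j - E) (-1) 1 0).
  set (B := 8 * exp K).
  assert (HB1 : 1 <= B) by (unfold B; pose proof (exp_ineq1_le K); lra).
  assert (HA : forall j, nm (A j) <= B).
  { intros j. unfold A, nm, B; simpl. rewrite Rabs_R0, Rabs_R1. replace (Rabs (-1)) with 1 by (unfold Rabs; destruct (Rcase_abs (-1)); lra).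
    pose proof (Vpot_bound f K w Hf HK0 (th + IZR j * w)). fold (Vs j) in H.
    pose proof (exp_ineq1_le K). unfold Rabs; destruct (Rcase_abs _); lra. }
  assert (HdetA : forall j, mdet (A j) = 1) by (intros j; unfold mdet, A; simpl; ring).
  set (L := 2 * K * exp K).
  assert (HVper : forall z x, Vpot f K w (x + IZR z) = Vpot f K w x).
  { intros z x. unfold Vpot. replace (x + IZR z + w) with (x + w + IZR z) by ring.
    rewrite !(f_periodZ f Hper). reflexivity. }
  set (v := (u (m + 1)%Z, u m)).
  assert (Hv : 0 < nv v).
  { pose proof (nv_snd v). simpl in H. assert (0 < Rabs (u m)) by (apply Rabs_pos_lt; auto). lra. }
  set (eta := nv v / 4).
  destruct (l2_decay u Hl2 (eta ^ 2) ltac:(unfold eta; nra)) as [N HN].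
  assert (HN' : forall j, (Z.of_nat N <= Z.abs j)%Z -> Rabs (u j) < eta).
  { intros j Hj. specialize (HN j Hj). assert (0 < eta) by (unfold eta; lra).
    destruct (Rlt_or_le (Rabs (u j)) eta); auto. exfalso.
    assert (eta ^ 2 <= Rabs (u j) ^ 2) by (apply pow_incr; lra).
    rewrite RPow_abs in H1. rewrite Rabs_pos_eq in H1 by nra. lra. }
  destruct Hbeta as [c' [Hc' Hb]].
  destruct (Hb (N + Z.to_nat (Z.abs m) + 2)%nat) as [n [Hn Hcn]].
  destruct (cf_approx w n Hw) as [q [P [Hq [Hq1 [Hnq HD]]]]].
  set (Q := INR q) in *.
  assert (HQ : 1 <= Q) by (unfold Q; apply (le_INR 1); auto).
  assert (HqS := cf_q_ge1 w (S n) Hw).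
  rewrite <- Hq in Hcn.
  assert (Hln : 40 * K * Q < ln (cf_q w (S n))).
  { apply Rlt_le_trans with (c' * Q). apply Rmult_lt_compat_r; lra.
    apply (Rmult_lt_compat_r Q) in Hcn; [|lra]. unfold Rdiv in Hcn.
    rewrite Rmult_assoc, Rinv_l, Rmult_1_r in Hcn by lra. lra. }
  set (D := Rabs (Q * w - IZR P)) in *.
  assert (HD0 : 0 <= D) by apply Rabs_pos.
  assert (HDe : D <= exp (- (40 * K * Q))).
  { rewrite exp_Ropp. apply Rle_trans with (/ cf_q w (S n)); auto.
    apply Rinv_le_contravar. apply exp_pos. rewrite <- (exp_ln (cf_q w (S n))) by lra.
    left; apply exp_increasing; auto. }
  set (mq := Z.of_nat q).
  assert (Hshift : forall k, Rabs (Vs (k + mq)%Z - Vs k) <= L * D).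
  { intros k. unfold Vs, mq. rewrite plus_IZR, <- INR_IZR_INZ. fold Q.
    replace (th + (IZR k + Q) * w) with (((th + IZR k * w) + (Q * w - IZR P)) + IZR P) by ring.
    rewrite HVper. eapply Rle_trans. apply (Vpot_lip f df K w Hder Hf Hdf HK0).
    unfold D, L. replace (th + IZR k * w + (Q * w - IZR P) - (th + IZR k * w)) with (Q * w - IZR P) by ring.
    lra. }
  assert (HAdiff : forall a b, nm (msub (A a) (A b)) = Rabs (Vs a - Vs b)).
  { intros a b. unfold nm, msub, A; simpl.
    replace (Vs a - E - (Vs b - E)) with (Vs a - Vs b) by ring.
    replace (-1 - -1) with 0 by ring. replace (1 - 1) with 0 by ring. replace (0 - 0) with 0 by ring.
    rewrite Rabs_R0. ring. }
  set (eps := 2 * Q * B ^ q * (L * D)).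
  assert (Hdiff : forall s, nm (msub (Pm A (s + mq) q) (Pm A s q)) <= eps).
  { intros s. unfold eps, Q. apply Pm_diff; auto.
    unfold L; pose proof (exp_pos K); apply Rmult_le_pos; [|auto]; nra.
    intros k. rewrite HAdiff. replace (s + mq + Z.of_nat k)%Z with ((s + Z.of_nat k) + mq)%Z by lia.
    apply Hshift. }
  assert (Hnum : eps * (2 * B ^ q) <= / 4).
  { unfold eps, Q, B, L. apply numeric; auto. }
  assert (HBq : 1 <= B ^ q) by (apply pow_R1_Rle; lra).
  assert (Heps0 : 0 <= eps).
  { unfold eps, L. pose proof (exp_pos K). apply Rmult_le_pos. apply Rmult_le_pos; lra.
    apply Rmult_le_pos; [|auto]; nra. }
  set (T := Pm A m q). set (T1 := Pm A (m + mq) q). set (T2 := Pm A (m - mq) q).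
  assert (Hsol := Pm_sol Vs E u Hrec).
  assert (E1 : mv T v = (u (m + mq + 1)%Z, u (m + mq)%Z)) by (apply Hsol).
  assert (E2 : mv T1 (mv T v) = (u (m + mq + mq + 1)%Z, u (m + mq + mq)%Z)).
  { rewrite E1. apply (Hsol (m + mq)%Z q). }
  assert (E3 : mv (madj T2) v = (u (m - mq + 1)%Z, u (m - mq)%Z)).
  { assert (H := Hsol (m - mq)%Z q). fold mq in H.
    replace (m - mq + mq + 1)%Z with (m + 1)%Z in H by lia.
    replace (m - mq + mq)%Z with m in H by lia. fold T2 in H. fold v in H.
    rewrite <- H. apply adj_mv. apply Pm_det; auto. }
  assert (HG := gordon T v (Pm_det A m q HdetA)).
  assert (Hsmall : forall a b : Z, (Z.of_nat N <= Z.abs a)%Z -> (Z.of_nat N <= Z.abs b)%Z ->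
     nv (u a, u b) < eta).
  { intros a b Ha Hb2. unfold nv; simpl. apply Rmax_lub_lt; auto. }
  assert (S1 : nv (mv T v) < eta) by (rewrite E1; apply Hsmall; unfold mq; lia).
  assert (S2 : nv (mv T1 (mv T v)) < eta) by (rewrite E2; apply Hsmall; unfold mq; lia).
  assert (S3 : nv (mv (madj T2) v) < eta) by (rewrite E3; apply Hsmall; unfold mq; lia).
  assert (Err1 : nv (vsub (mv T (mv T v)) (mv T1 (mv T v))) <= nv v / 4).
  { rewrite nv_vsub_sym, mv_sub. eapply Rle_trans. apply nv_mv.
    pose proof (nv_mv T v). pose proof (Pm_bound A m q B HB1 HA). fold T in H0.
    pose proof (nm_ge0 (msub T1 T)). pose proof (nv_ge0 (mv T v)). pose proof (nm_ge0 T).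
    pose proof (nv_ge0 v).
    assert (nm (msub T1 T) <= eps) by (apply Hdiff).
    apply Rle_trans with (eps * (2 * B ^ q * nv v)).
    apply Rmult_le_compat; auto. eapply Rle_trans. apply H. apply Rmult_le_compat_r; auto.
    unfold eta in *. nra. }
  assert (Err2 : nv (vsub (mv (madj T) v) (mv (madj T2) v)) <= nv v / 4).
  { rewrite mv_sub, madj_sub. eapply Rle_trans. apply nv_mv. rewrite nm_adj.
    assert (nm (msub T T2) <= eps).
    { unfold T, T2. replace m with ((m - mq) + mq)%Z at 1 by lia. apply Hdiff. }
    pose proof (nv_ge0 v). pose proof (nm_ge0 (msub T T2)).
    apply Rle_trans with (eps * nv v). apply Rmult_le_compat_r; auto. nra. }
  pose proof (nv_vsub_lower (mv T (mv T v)) (mv T1 (mv T v))).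
  pose proof (nv_vsub_lower (mv (madj T) v) (mv (madj T2) v)).
  assert (Hmax : Rmax (nv (mv (madj T) v)) (Rmax (nv (mv T v)) (nv (mv T (mv T v)))) < nv v / 2).
  { unfold eta in *. apply Rmax_lub_lt. lra. apply Rmax_lub_lt; lra. }
  lra.
Qed.
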